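(* For every finite set $\Gamma$, the assignment $X\mapsto TX$ (tape maps) is closed under the unit and Kleisli extension of the store monad with store $S=\mathbb Z\times\Gamma^{\mathbb Z}$: for every set $X$ and $x\in X$, $\eta(x)\in TX$; and for every $p\in TX$ and every map $f:X\to TY$, $f^\dagger(p)\in TY$. Hence the tape monad is a well-defined submonad of the store monad.
   Context: Store monad over $S$: $X\mapsto(X\times S)^S$ with $\eta(x)(s)=(x,s)$ and, for $p=\langle r,z,t\rangle$ (writing $s=(i,\sigma)$) and $f:X\to(Y\times S)^S$, $f^\dagger(p)(i,\sigma)=f(r(i,\sigma))(z(i,\sigma),t(i,\sigma))$. Notation: $\sigma=_{i\pm k}\sigma'$ iff $\sigma(j)=\sigma'(j)$ whenever $|i-j|\le k$; $\sigma=^{i\pm k}\sigma'$ iff $\sigma(j)=\sigma'(j)$ whenever $|i-j|>k$; $\sigma_{+j}=\sigma\circ(\lambda i.i+j)$. $TX$ is the set of $\langle r,z,t\rangle:\mathbb Z\times\Gamma^{\mathbb Z}\to X\times\mathbb Z\times\Gamma^{\mathbb Z}$ for which there is $k\ge0$ such that for all $i,j\in\mathbb Z$ and all $\sigma,\sigma'$ with $\sigma=_{i\pm k}\sigma'$: $t(i,\sigma)=_{i\pm k}t(i,\sigma')$, $r(i,\sigma)=r(i,\sigma')$, $|z(i,\sigma)-i|\le k$, $t(i,\sigma)=^{i\pm k}\sigma$, $z(i,\sigma)=z(i,\sigma')$, $t(i,\sigma_{+j})=t(i+j,\sigma)_{+j}$, $r(i,\sigma_{+j})=r(i+j,\sigma)$,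 $z(i,\sigma_{+j})=z(i+j,\sigma)-j$. *)

(* Defs.v *)
From Stdlib Require Import ZArith List.
Open Scope Z_scope.

Definition tape (G : Type) := Z -> G.
Definition store (G : Type) := (Z * tape G)%type.

Definition StoreM (G X : Type) := store G -> (X * store G)%type.

Definition eta {G X : Type} (x : X) : StoreM G X := fun s => (x, s).

Definition kext {G X Y : Type} (f : X -> StoreM G Y) (p : StoreM G X) : StoreM G Y :=
  fun s => f (fst (p s)) (snd (p s)).

Definition r_of {G X} (p : StoreM G X) (i : Z) (sg : tape G) : X := fst (p (i, sg)).
Definition z_of {G X} (p : StoreM G X) (i : Z) (sg : tape G) : Z := fst (snd (p (i, sg))).
Definition t_of {G X} (p : StoreM G X) (i : Z) (sg : tape G) : tape G := snd (snd (p (i, sg))).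

Definition eq_near {G} (i k : Z) (sg sg' : tape G) : Prop :=
  forall j, Z.abs (i - j) <= k -> sg j = sg' j.
Definition eq_far {G} (i k : Z) (sg sg' : tape G) : Prop :=
  forall j, Z.abs (i - j) > k -> sg j = sg' j.
Definition shift {G} (sg : tape G) (j : Z) : tape G := fun i => sg (i + j).

Definition is_tape_map {G X : Type} (p : StoreM G X) : Prop :=
  exists k : Z, 0 <= k /\
    forall (i j : Z) (sg sg' : tape G), eq_near i k sg sg' ->
      eq_near i k (t_of p i sg) (t_of p i sg') /\
      r_of p i sg = r_of p i sg' /\
      Z.abs (z_of p i sg - i) <= k /\
      eq_far i k (t_of p i sg) sg /\
      z_of p i sg = z_of p i sg' /\
      t_of p i (shift sg j) = shift (t_of p (i + j) sg) j /\
      r_of p i (shift sg j) = r_of p (i + j) sg /\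
      z_of p i (shift sg j) = z_of p (i + j) sg - j.

Definition finite_type (G : Type) : Prop := exists l : list G, forall g, In g l.

(* Main.v *)
Require Import Defs.
From Stdlib Require Import ZArith List Lia.

Definition TM {G X : Type} (k : Z) (p : StoreM G X) : Prop :=
  0 <= k /\
    forall (i j : Z) (sg sg' : tape G), eq_near i k sg sg' ->
      eq_near i k (t_of p i sg) (t_of p i sg') /\
      r_of p i sg = r_of p i sg' /\
      Z.abs (z_of p i sg - i) <= k /\
      eq_far i k (t_of p i sg) sg /\
      z_of p i sg = z_of p i sg' /\
      t_of p i (Defs.shift sg j) = Defs.shift (t_of p (i + j) sg) j /\
      r_of p i (Defs.shift sg j) = r_of p (i + j) sg /\
      z_of p i (Defs.shift sg j) = z_of p (i + j) sg - j.

Lemma near_refl {G} i k (sg : tape G) : eq_near i k sg sg.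
Proof. intros j _; reflexivity. Qed.

Lemma TM_mono {G X} (p : StoreM G X) k k' : TM k p -> k <= k' -> TM k' p.
Proof.
  intros [Hk H] Hkk'. split; [lia|].
  intros i j sg sg' Hn.
  assert (Hn0 : eq_near i k sg sg') by (intros m Hm; apply Hn; lia).
  destruct (H i j sg sg' Hn0) as (A1&A2&A3&A4&A5&A6&A7&A8).
  destruct (H i j sg' sg' (near_refl _ _ _)) as (B1&B2&B3&B4&B5&B6&B7&B8).
  repeat split; auto; try lia.
  - intros m Hm. destruct (Z_le_gt_dec (Z.abs (i - m)) k).
    + apply A1; auto.
    + rewrite A4, B4 by lia. apply Hn; auto.
  - intros m Hm. apply A4. lia.
Qed.

Definition upd {G} (t : tape G) (a : Z) (g : G) : tape G :=
  fun j => if Z.eq_dec j a then g else t j.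

Lemma window_lemma {G X Y} (l : list G) (Hl : forall g, In g l)
  (f : X -> StoreM G Y) (Hf : forall x, exists k, TM k (f x)) :
  forall (n : nat) (F : tape G -> X) (a : Z),
    (forall t t', (forall j, a <= j < a + Z.of_nat n -> t j = t' j) -> F t = F t') ->
    exists K, 0 <= K /\ forall t, TM K (f (F t)).
Proof.
  induction n as [|n IH]; intros F a HF.
  - destruct l as [|g0 l0].
    + exists 0. split; [lia|]. intros t. destruct (Hl (t 0)).
    + destruct (Hf (F (fun _ => g0))) as [k Hk].
      exists k. split; [apply Hk|]. intros t.
      rewrite (HF t (fun _ => g0)); auto. intros j Hj; lia.
  - assert (Hall : forall l' : list G, exists K, 0 <= K /\
       forall g, In g l' -> forall t, TM K (f (F (upd t a g)))).
    { induction l' as [|g l' IHl].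
      - exists 0. split; [lia|]. intros g [].
      - destruct IHl as [K1 [HK1 H1]].
        destruct (IH (fun t => F (upd t a g)) (a + 1)) as [K2 [HK2 H2]].
        { intros t t' Ht. apply HF. intros j Hj. unfold upd.
          destruct (Z.eq_dec j a); auto. apply Ht. lia. }
        exists (Z.max K1 K2). split; [lia|].
        intros g' [<-|Hin] t.
        + eapply TM_mono; [apply H2|lia].
        + eapply TM_mono; [apply H1; auto|lia]. }
    destruct (Hall l) as [K [HK H]]. exists K. split; auto.
    intros t. specialize (H (t a) (Hl _) t).
    replace (F t) with (F (upd t a (t a))); auto.
    apply HF. intros j _. unfold upd. destruct (Z.eq_dec j a); subst; auto.
Qed.

Lemma kext_r {G X Y} (f : X -> StoreM G Y) p i sg :
  r_of (kext f p) i sg = r_of (f (r_of p i sg)) (z_of p i sg) (t_of p i sg).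
Proof. unfold r_of, z_of, t_of, kext. destruct (p (i, sg)) as [x [z t]]; reflexivity. Qed.
Lemma kext_z {G X Y} (f : X -> StoreM G Y) p i sg :
  z_of (kext f p) i sg = z_of (f (r_of p i sg)) (z_of p i sg) (t_of p i sg).
Proof. unfold r_of, z_of, t_of, kext. destruct (p (i, sg)) as [x [z t]]; reflexivity. Qed.
Lemma kext_t {G X Y} (f : X -> StoreM G Y) p i sg :
  t_of (kext f p) i sg = t_of (f (r_of p i sg)) (z_of p i sg) (t_of p i sg).
Proof. unfold r_of, z_of, t_of, kext. destruct (p (i, sg)) as [x [z t]]; reflexivity. Qed.

Theorem mainTheorem15 (G : Type) (HG : finite_type G) :
  (forall (X : Type) (x : X), is_tape_map (G := G) (eta x)) /\
  (forall (X Y : Type) (p : StoreM G X) (f : X -> StoreM G Y),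
      is_tape_map p -> (forall x, is_tape_map (f x)) ->
      is_tape_map (kext f p)).
Proof.
  split.
  - intros X x. exists 0. split; [lia|]. intros i j sg sg' Hn.
    unfold t_of, r_of, z_of, eta; simpl.
    repeat split; auto; try lia.
  - intros X Y p f [kp [Hkp Hp]] Hf.
    destruct HG as [l Hl].
    assert (Hf' : forall x, exists k, TM k (f x)) by exact Hf.
    destruct (window_lemma l Hl f Hf' (Z.to_nat (2 * kp + 1)) (fun t => r_of p 0 t) (- kp))
      as [K [HK HKf]].
    { intros t t' Ht. apply (Hp 0 0 t t'). intros j Hj. apply Ht. lia. }
    assert (HR : forall i sg, TM K (f (r_of p i sg))).
    { intros i sg. destruct (Hp 0 i sg sg (near_refl _ _ _)) as (_&_&_&_&_&_&E&_).
      simpl in E. rewrite <- E. apply HKf. }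
    exists (kp + K). split; [lia|].
    intros i j sg sg' Hn.
    assert (Hn0 : eq_near i kp sg sg') by (intros m Hm; apply Hn; lia).
    destruct (Hp i j sg sg' Hn0) as (A1&A2&A3&A4&A5&A6&A7&A8).
    destruct (Hp i j sg' sg' (near_refl _ _ _)) as (B1&B2&B3&B4&B5&B6&B7&B8).
    rewrite !kext_r, !kext_z, !kext_t.
    set (r := r_of p i sg) in *. set (z := z_of p i sg) in *.
    set (t := t_of p i sg) in *. set (t' := t_of p i sg') in *.
    assert (Htt : eq_near i (kp + K) t t').
    { intros m Hm. destruct (Z_le_gt_dec (Z.abs (i - m)) kp).
      + apply A1; auto.
      + rewrite A4, B4 by lia. apply Hn; auto. }
    assert (Htz : eq_near z K t t') by (intros m Hm; apply Htt; lia).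
    destruct (HR i sg) as [_ HF].
    fold r in HF.
    destruct (HF z j t t' Htz) as (C1&C2&C3&C4&C5&C6&C7&C8).
    destruct (HF z j t' t' (near_refl _ _ _)) as (D1&D2&D3&D4&D5&D6&D7&D8).
    rewrite <- A2, <- A5. fold r z t'.
    rewrite A6, A7, A8.
    destruct (HR (i + j) sg) as [_ HF2].
    destruct (HF2 (z_of p (i + j) sg - j) j (t_of p (i + j) sg) (t_of p (i + j) sg)
                (near_refl _ _ _)) as (E1&E2&E3&E4&E5&E6&E7&E8).
    replace (z_of p (i + j) sg - j + j) with (z_of p (i + j) sg) in E6, E7, E8 by lia.
    repeat split.
    + intros m Hm. destruct (Z_le_gt_dec (Z.abs (z - m)) K).
      * apply C1; auto.
      * rewrite C4, D4 by lia. apply Htt; auto.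
    + exact C2.
    + lia.
    + intros m Hm. rewrite C4 by lia. apply A4. lia.
    + exact C5.
    + exact E6.
    + exact E7.
    + rewrite E8. lia.
Qed.
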